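(* Let $X$ be a vector lattice and let $l : X \to \mathbb{R}$ be an order bounded linear functional. Then $\ker(l)$ is a Grothendieck subspace of $X$ if and only if $\ker(|l|)$ is a Grothendieck subspace of $X$, where $|l|$ is the modulus of $l$.
   Context: The modulus of an order bounded functional $l$ is $|l| = l \vee (-l)$ in the Riesz space of order bounded functionals. A linear subspace $H$ of a vector lattice is called a Grothendieck subspace (or $G$-space) if for all $x, y \in H$ one has $x \vee y \vee 0 + x \wedge y \wedge 0 \in H$. *)

(* Defs.v *)
From HB Require Import structures.
From mathcomp Require Import all_boot all_order all_algebra.
From mathcomp Require Import reals.
Set Implicit Arguments. Unset Strict Implicit. Unset Printing Implicit Defensive.
Import Order.TTheory GRing.Theory Num.Theory.
Local Open Scope ring_scope.

Record vectorLattice (R : realType) (X : lmodType R) := VectorLattice {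
  vle : X -> X -> Prop;
  vjoin : X -> X -> X;
  vmeet : X -> X -> X;
  vle_refl : forall x, vle x x;
  vle_anti : forall x y, vle x y -> vle y x -> x = y;
  vle_trans : forall x y z, vle x y -> vle y z -> vle x z;
  vle_add : forall x y z, vle x y -> vle (x + z) (y + z);
  vle_scale : forall (a : R) x y, 0 <= a -> vle x y -> vle (a *: x) (a *: y);
  vjoin_ub_l : forall x y, vle x (vjoin x y);
  vjoin_ub_r : forall x y, vle y (vjoin x y);
  vjoin_least : forall x y z, vle x z -> vle y z -> vle (vjoin x y) z;
  vmeet_lb_l : forall x y, vle (vmeet x y) x;
  vmeet_lb_r : forall x y, vle (vmeet x y) y;
  vmeet_greatest : forall x y z, vle z x -> vle z y -> vle z (vmeet x y);
}.

Section Defs.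
Variables (R : realType) (X : lmodType R) (V : vectorLattice X).

Definition linear_functional (f : X -> R) : Prop :=
  forall (a : R) (x y : X), f (a *: x + y) = a * f x + f y.

Definition order_bounded (f : X -> R) : Prop :=
  forall a b : X, exists M : R,
    forall x, vle V a x -> vle V x b -> `|f x| <= M.

(* the order of the space of order bounded functionals: f <= g iff g - f is positive *)
Definition func_le (f g : X -> R) : Prop :=
  forall x, vle V 0 x -> f x <= g x.

(* m = |l| = l \/ (-l), the supremum of l and -l in the ordered vector space
   of order bounded linear functionals *)
Definition is_modulus (l m : X -> R) : Prop :=
  [/\ linear_functional m, order_bounded m,
      func_le l m, func_le (fun x => - l x) m &
      forall m', linear_functional m' -> order_bounded m' ->
        func_le l m' -> func_le (fun x => - l x) m' -> func_le m m'].

Definition kernel (f : X -> R) : X -> Prop := fun x => f x = 0.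

Definition G_space (H : X -> Prop) : Prop :=
  (forall x y, H x -> H y -> forall a : R, H (a *: x + y)) /\ H 0 /\
  forall x y, H x -> H y ->
    H (vjoin V (vjoin V x y) 0 + vmeet V (vmeet V x y) 0).

End Defs.

(* Main.v *)
Require Import Defs.
From mathcomp Require Import all_boot all_order all_algebra.
From mathcomp Require Import reals classical_sets.
From mathcomp Require Import ring lra.
From Stdlib Require Import Classical.
Set Implicit Arguments. Unset Strict Implicit. Unset Printing Implicit Defensive.
Import Order.TTheory GRing.Theory Num.Theory.
Local Open Scope ring_scope.

Section Lat.
Variables (R : realType) (X : lmodType R) (V : vectorLattice X).
Local Notation le := (vle V).
Local Notation jn := (vjoin V).
Local Notation mt := (vmeet V).

Lemma le_addl x y z : le x y -> le (z + x) (z + y).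
Proof. by move=> h; rewrite ![z + _]addrC; apply: vle_add. Qed.

Lemma le_add2 a b c d : le a b -> le c d -> le (a + c) (b + d).
Proof. move=> h1 h2; apply: (vle_trans (vle_add c h1)); exact: le_addl. Qed.

Lemma le_opp x y : le x y -> le (- y) (- x).
Proof.
move=> h; have := vle_add (- x - y) h.
by rewrite addrA subrr add0r addrCA subrr addr0.
Qed.

Lemma le_sub0 x y : le x y -> le 0 (y - x).
Proof. by move=> h; have := vle_add (- x) h; rewrite subrr. Qed.

Lemma le_0sub x y : le 0 (y - x) -> le x y.
Proof. by move=> h; have := vle_add x h; rewrite add0r subrK. Qed.

Lemma le_scale0 (a : R) x : 0 <= a -> le 0 x -> le 0 (a *: x).
Proof. by move=> ha h; have := vle_scale ha h; rewrite scaler0. Qed.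

Definition ab x := jn x (- x).

Lemma ab_ge x : le x (ab x). Proof. exact: vjoin_ub_l. Qed.
Lemma ab_geN x : le (- x) (ab x). Proof. exact: vjoin_ub_r. Qed.
Lemma ab_ge0 x : le 0 (ab x).
Proof.
have h := le_add2 (ab_ge x) (ab_geN x); rewrite subrr in h.
have h2 : (0:R) <= 2^-1 by rewrite invr_ge0 ler0n.
have := le_scale0 h2 h.
by rewrite -[ab x + ab x](scaler_nat 2) scalerA mulVf ?scale1r ?pnatr_eq0.
Qed.

Lemma le_adde x y e : le x y -> le 0 e -> le x (y + e).
Proof. by move=> h he; rewrite -[x]addr0; apply: le_add2. Qed.

Lemma le_subr x y c : le (x - c) y -> le x (y + c).
Proof. by move=> h; have := vle_add c h; rewrite subrK. Qed.

Lemma le_subl x y c : le x (y + c) -> le (x - c) y.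
Proof. by move=> h; have := vle_add (- c) h; rewrite addrK. Qed.

Definition close a b d := [/\ le 0 d, le a (b + d) & le b (a + d)].

Lemma close_sym a b d : close a b d -> close b a d.
Proof. by case. Qed.

Lemma close_refl a : close a a 0.
Proof. by split; rewrite ?addr0; apply: vle_refl. Qed.

Lemma close_add a b d a' b' d' : close a b d -> close a' b' d' ->
  close (a + a') (b + b') (d + d').
Proof.
case=> h0 h1 h2 [h0' h1' h2']; split.
- by rewrite -[0]addr0; apply: le_add2.
- by rewrite addrACA; apply: le_add2.
- by rewrite addrACA; apply: le_add2.
Qed.

Lemma close_opp a b d : close a b d -> close (- a) (- b) d.
Proof.
case=> h0 h1 h2; split => //.
- by apply: le_subr; have := le_opp h2; rewrite opprD.
- by apply: le_subr; have := le_opp h1; rewrite opprD.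
Qed.

Lemma close_join1 a b a' b' d e : close a a' d -> close b b' e ->
  le (jn a b) (jn a' b' + (d + e)).
Proof.
case=> h0 h1 h2 [e0 e1 e2]; apply: vjoin_least.
- apply: (vle_trans h1); rewrite addrA; apply: le_adde => //.
  by apply: vle_add; apply: vjoin_ub_l.
- apply: (vle_trans e1); rewrite (addrC d) addrA; apply: le_adde => //.
  by apply: vle_add; apply: vjoin_ub_r.
Qed.

Lemma close_meet1 a b a' b' d e : close a a' d -> close b b' e ->
  le (mt a b) (mt a' b' + (d + e)).
Proof.
case=> h0 h1 h2 [e0 e1 e2]; apply: le_subr; apply: vmeet_greatest.
- apply: le_subl; apply: (vle_trans (vmeet_lb_l V _ _)).
  by apply: (vle_trans h1); rewrite addrA; apply: le_adde => //; apply: vle_refl.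
- apply: le_subl; apply: (vle_trans (vmeet_lb_r V _ _)).
  by apply: (vle_trans e1); rewrite (addrC d) addrA; apply: le_adde => //; apply: vle_refl.
Qed.

Lemma close_join a b a' b' d e : close a a' d -> close b b' e ->
  close (jn a b) (jn a' b') (d + e).
Proof.
move=> h1 h2; split; first by case: h1 => ? _ _; case: h2 => ? _ _;
  rewrite -[0]addr0; apply: le_add2.
- exact: close_join1.
- exact: close_join1 (close_sym h1) (close_sym h2).
Qed.

Lemma close_meet a b a' b' d e : close a a' d -> close b b' e ->
  close (mt a b) (mt a' b') (d + e).
Proof.
move=> h1 h2; split; first by case: h1 => ? _ _; case: h2 => ? _ _;
  rewrite -[0]addr0; apply: le_add2.
- exact: close_meet1.
- exact: close_meet1 (close_sym h1) (close_sym h2).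
Qed.

Definition T x y := jn (jn x y) 0 + mt (mt x y) 0.

Lemma close_T a b a' b' d e : close a a' d -> close b b' e ->
  close (T a b) (T a' b') ((d + e) + (d + e)).
Proof.
move=> h1 h2; apply: close_add.
- by rewrite -[d + e]addr0; apply: close_join; [exact: close_join|exact: close_refl].
- by rewrite -[d + e]addr0; apply: close_meet; [exact: close_meet|exact: close_refl].
Qed.

Lemma vle_antisym x y : le x y -> le y x -> x = y.
Proof. exact: vle_anti. Qed.

Lemma opp_join a b : - jn a b = mt (- a) (- b).
Proof.
apply: vle_anti.
- by apply: vmeet_greatest; apply: le_opp; [apply: vjoin_ub_l|apply: vjoin_ub_r].
- rewrite -[mt _ _]opprK; apply: le_opp; apply: vjoin_least.
  + by rewrite -[a]opprK; apply: le_opp; rewrite opprK; apply: vmeet_lb_l.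
  + by rewrite -[b]opprK; apply: le_opp; rewrite opprK; apply: vmeet_lb_r.
Qed.

Lemma opp_meet a b : - mt a b = jn (- a) (- b).
Proof.
by rewrite -[a]opprK -[b]opprK -opp_join !opprK.
Qed.

Lemma T_opp a b : T (- a) (- b) = - T a b.
Proof.
rewrite /T opprD opp_join opp_meet !opp_join !opp_meet oppr0 addrC.
done.
Qed.

Lemma ab_close x : close x 0 (ab x).
Proof.
split; first exact: ab_ge0.
- by rewrite add0r; apply: ab_ge.
- by have := vle_add x (ab_geN x); rewrite addNr addrC.
Qed.
End Lat.

Section Fun.
Variables (R : realType) (X : lmodType R) (V : vectorLattice X).
Local Notation le := (vle V).
Local Notation jn := (vjoin V).
Local Notation mt := (vmeet V).

Section Lin.
Variable f : X -> R.
Hypothesis hf : linear_functional f.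
Lemma lf0 : f 0 = 0.
Proof.
have := hf 1 0 0; rewrite scaler0 addr0 mul1r => h.
by have := subrr (f 0); rewrite {1}h addrK.
Qed.
Lemma lfD x y : f (x + y) = f x + f y.
Proof. by rewrite -[x in LHS]scale1r hf mul1r. Qed.
Lemma lfZ a x : f (a *: x) = a * f x.
Proof. by rewrite -[_ *: _]addr0 hf lf0 addr0. Qed.
Lemma lfN x : f (- x) = - f x.
Proof. by rewrite -scaleN1r lfZ mulN1r. Qed.
Lemma lfB x y : f (x - y) = f x - f y.
Proof. by rewrite lfD lfN. Qed.
End Lin.

Variables (l m : X -> R).
Hypotheses (hl : linear_functional l) (hb : order_bounded V l)
  (hm : is_modulus V l m).

Let lm : linear_functional m. Proof. by case: hm. Qed.
Let mpos1 w : le 0 w -> l w <= m w. Proof. by case: hm => _ _ h _ _; apply: h. Qed.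
Let mpos2 w : le 0 w -> - l w <= m w. Proof. by case: hm => _ _ _ h _; apply: h. Qed.

Lemma closeLM a b d : close V a b d ->
  [/\ l b + l d - l a <= m b + m d - m a,
      - (l b + l d - l a) <= m b + m d - m a,
      l a + l d - l b <= m a + m d - m b &
      - (l a + l d - l b) <= m a + m d - m b].
Proof.
case=> _ h1 h2.
have w1 := le_sub0 h1; have w2 := le_sub0 h2.
have := mpos1 w1; have := mpos2 w1; have := mpos1 w2; have := mpos2 w2.
by rewrite !(lfB hl) !(lfD hl) !(lfB lm) !(lfD lm).
Qed.

Lemma lip_l a b d : close V a b d -> `|l a - l b| <= m d.
Proof. by move=> /closeLM[h1 h2 h3 h4]; rewrite ler_norml; apply/andP; split; lra. Qed.
Lemma lip_m a b d : close V a b d -> `|m a - m b| <= m d.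
Proof. by move=> /closeLM[h1 h2 h3 h4]; rewrite ler_norml; apply/andP; split; lra. Qed.
Lemma m_ge0 d : le 0 d -> 0 <= m d.
Proof. by move=> h; have := mpos1 h; have := mpos2 h; lra. Qed.

Definition Es u : set R := fun r => exists z, [/\ le 0 z, le z u & r = - l z].
Definition s u := sup (Es u).

Lemma Es_has_sup u : le 0 u -> has_sup (Es u).
Proof.
move=> hu; split.
  by exists 0; exists (0:X); split; [exact: vle_refl|exact: hu|rewrite (lf0 hl) oppr0].
case: (hb 0 u) => M hM; exists M => r [z [h1 h2 ->]].
by have := hM z h1 h2; rewrite ler_norml => /andP[h _]; rewrite lerNl.
Qed.

Lemma s_ub u z : le 0 z -> le z u -> - l z <= s u.
Proof.
move=> h1 h2; apply: sup_upper_bound; first exact: Es_has_sup (vle_trans h1 h2).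
by exists z.
Qed.

Lemma s_least u c : le 0 u -> (forall z, le 0 z -> le z u -> - l z <= c) -> s u <= c.
Proof.
move=> hu h; apply: ge_sup; first by case: (Es_has_sup hu).
by move=> r [z [h1 h2 ->]]; apply: h.
Qed.

Lemma s_adh u e : le 0 u -> 0 < e -> exists z, [/\ le 0 z, le z u & s u - e < - l z].
Proof.
move=> hu he; case: (sup_adherent he (Es_has_sup hu)) => r [z [h1 h2 ->]] h.
by exists z.
Qed.

Lemma s_ge0 u : le 0 u -> 0 <= s u.
Proof. by move=> hu; have := s_ub (vle_refl V 0) hu; rewrite (lf0 hl) oppr0. Qed.

Lemma decomp z u v : le 0 z -> le z (u + v) -> le 0 u -> le 0 v ->
  [/\ le 0 (mt z u), le (mt z u) u, le 0 (z - mt z u) & le (z - mt z u) v].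
Proof.
move=> hz hzuv hu hv; split.
- exact: vmeet_greatest.
- exact: vmeet_lb_r.
- exact: le_sub0 (vmeet_lb_l V _ _).
- apply: le_subl; rewrite addrC; apply: le_subr; apply: vmeet_greatest.
  + by apply: le_subl; apply: le_adde => //; apply: vle_refl.
  + exact: le_subl.
Qed.

Lemma sD u v : le 0 u -> le 0 v -> s (u + v) = s u + s v.
Proof.
move=> hu hv; have huv : le 0 (u + v) by rewrite -[0]addr0; apply: le_add2.
apply/eqP; rewrite eq_le; apply/andP; split.
- apply: s_least => // z h1 h2.
  case: (decomp h1 h2 hu hv) => g1 g2 g3 g4.
  have := s_ub g1 g2; have := s_ub g3 g4; rewrite (lfB hl); lra.
- have : s u <= s (u + v) - s v; last by lra.
  apply: s_least => // z1 h1 h2.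
  have : s v <= s (u + v) + l z1; last by lra.
  apply: s_least => // z2 g1 g2.
  have := le_add2 h1 g1; rewrite addr0 => g3.
  have := s_ub g3 (le_add2 h2 g2); rewrite (lfD hl); lra.
Qed.

Lemma s0 : s 0 = 0.
Proof. have := sD (vle_refl V 0) (vle_refl V 0); rewrite addr0; lra. Qed.

Lemma sZ a u : 0 < a -> le 0 u -> s (a *: u) = a * s u.
Proof.
move=> ha hu; have hau := le_scale0 (ltW ha) hu.
have ia : 0 <= a^-1 by rewrite invr_ge0 ltW.
have an0 : a != 0 by rewrite gt_eqF.
apply/eqP; rewrite eq_le; apply/andP; split.
- apply: s_least => // z h1 h2.
  have g1 := le_scale0 ia h1.
  have g2 := vle_scale ia h2; rewrite scalerA mulVf // scale1r in g2.
  have := s_ub g1 g2; rewrite (lfZ hl) => h.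
  have -> : - l z = a * (- (a^-1 * l z)) by rewrite mulrN mulrA mulfV // mul1r.
  by apply: ler_wpM2l => //; rewrite ltW.
- have : s u <= a^-1 * s (a *: u).
    apply: s_least => // z h1 h2.
    have := s_ub (le_scale0 (ltW ha) h1) (vle_scale (ltW ha) h2).
    rewrite (lfZ hl) -mulrN => h.
    have -> : - l z = a^-1 * (a * - l z) by rewrite mulrA mulVf // mul1r.
    exact: ler_wpM2l.
  by move=> h; have := ler_wpM2l (ltW ha) h; rewrite mulrA mulfV // mul1r.
Qed.

Lemma sZ0 a u : 0 <= a -> le 0 u -> s (a *: u) = a * s u.
Proof.
move=> ha hu; have [->|an0] := eqVneq a 0; first by rewrite scale0r s0 mul0r.
by apply: sZ => //; rewrite lt0r an0.
Qed.

Definition S x := s (ab V x) - s (ab V x - x).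

Lemma Swd a b : le 0 a -> le 0 b -> S (a - b) = s a - s b.
Proof.
move=> ha hb'; rewrite /S.
set p := ab V (a - b).
have hp : le 0 p by exact: ab_ge0.
have hq : le 0 (p - (a - b)) by exact: le_sub0 (ab_ge _ _).
have e : p + b = (p - (a - b)) + a by rewrite opprB addrA subrK.
have := sD hp hb'; have := sD hq ha; rewrite -e => h1 h2; lra.
Qed.

Lemma S_pos u : le 0 u -> S u = s u.
Proof. by move=> hu; have := Swd hu (vle_refl V 0); rewrite subr0 s0 subr0. Qed.

Lemma S_lin : linear_functional S.
Proof.
move=> a x y.
have dec w : exists wa wb, [/\ w = wa - wb, le 0 wa, le 0 wb & S w = s wa - s wb].
  exists (ab V w), (ab V w - w); split => //.
  - by rewrite opprB addrC subrK.
  - exact: ab_ge0.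
  - exact: le_sub0 (ab_ge _ _).
have [xa [xb [ex hxa hxb ->]]] := dec x.
have [ya [yb [ey hya hyb ->]]] := dec y.
have [ha|ha] := leP 0 a.
- have -> : a *: x + y = (a *: xa + ya) - (a *: xb + yb).
    by rewrite ex ey scalerBr opprD addrACA.
  rewrite Swd; last first.
  + by rewrite -[0]addr0; apply: le_add2 => //; apply: le_scale0.
  + by rewrite -[0]addr0; apply: le_add2 => //; apply: le_scale0.
  rewrite !sD ?sZ0 //; try by apply: le_scale0.
  ring.
- have hna : 0 <= - a by rewrite oppr_ge0 ltW.
  have -> : a *: x + y = ((- a) *: xb + ya) - ((- a) *: xa + yb).
    rewrite ex ey !scaleNr scalerBr opprD opprK addrACA addrC.
    by rewrite addrACA [RHS]addrACA [ya - yb]addrC.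
  rewrite Swd; last first.
  + by rewrite -[0]addr0; apply: le_add2 => //; apply: le_scale0.
  + by rewrite -[0]addr0; apply: le_add2 => //; apply: le_scale0.
  rewrite !sD ?sZ0 //; try by apply: le_scale0.
  ring.
Qed.

Definition c x := l x + (S x + S x).

Lemma c_lin : linear_functional c.
Proof. by move=> a x y; rewrite /c hl !S_lin; ring. Qed.

Lemma S_mono a x : le a x -> S a <= S x.
Proof.
move=> h; have h0 := le_sub0 h.
have := s_ge0 h0; rewrite -S_pos // (lfB S_lin); lra.
Qed.

Lemma c_ob : order_bounded V c.
Proof.
move=> a b; case: (hb a b) => M hM.
exists (M + 2 * (`|S a| + `|S b|)) => x h1 h2.
have := hM x h1 h2; rewrite /c !ler_norml => /andP[g1 g2].
have := S_mono h1; have := S_mono h2.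
have := ler_norm (S a); have := ler_norm (S b).
have := ler_norm (- S a); have := ler_norm (- S b); rewrite !normrN.
move=> *; apply/andP; split; lra.
Qed.

Lemma m_le u : le 0 u -> m u <= l u + 2 * s u.
Proof.
move=> hu.
have hc : func_le V m c.
  case: hm => _ _ _ _; apply.
  - exact: c_lin.
  - exact: c_ob.
  - by move=> x hx; rewrite /c S_pos //; have := s_ge0 hx; lra.
  - move=> x hx; rewrite /c S_pos //; have := s_ub hx (vle_refl V x); lra.
have := hc u hu; rewrite /c S_pos //; lra.
Qed.

Lemma split_z u e : le 0 u -> 0 < e ->
  exists z, [/\ le 0 z, le z u & m u - l u + 2 * l z <= e].
Proof.
move=> hu he; have he2 : 0 < e / 2 by rewrite divr_gt0.
case: (s_adh hu he2) => z [h1 h2 h3]; exists z; split => //.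
have := m_le hu; lra.
Qed.

Lemma clamp u z w : le 0 z -> le z u -> close V w 0 u ->
  close V (jn (mt w z) (- z)) 0 z /\ close V w (jn (mt w z) (- z)) (u - z).
Proof.
move=> hz hzu [hu hw1 hw2]; rewrite add0r in hw1.
have hnz : le (- z) z.
  by apply: (vle_trans _ hz); have := le_opp hz; rewrite oppr0.
have huz : le 0 (u - z) := le_sub0 hzu.
split; split => //.
- by rewrite add0r; apply: vjoin_least => //; apply: vmeet_lb_r.
- by have := vle_add z (vjoin_ub_r V (mt w z) (- z)); rewrite addNr.
- apply: le_subr; apply: vle_trans (vjoin_ub_l V _ _).
  apply: vmeet_greatest.
  + by apply: le_subl; apply: le_adde => //; apply: vle_refl.
  + by apply: le_subl; rewrite addrC subrK.
- apply: vjoin_least.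
  + apply: vle_trans (vmeet_lb_l V _ _) _.
    by apply: le_adde => //; apply: vle_refl.
  + by have := vle_add (- z) hw2; rewrite sub0r addrA.
Qed.

Lemma sh1 p z w : close V p 0 z -> close V (w - p - p) w (z + z).
Proof.
move=> h; have := close_add (close_add (close_refl V w) (close_opp h)) (close_opp h).
by rewrite oppr0 !addr0 add0r.
Qed.

Lemma sh2 p d w : close V w p d -> close V (w - p - p) (- p) d.
Proof.
move=> h; have := close_add (close_add h (close_refl V (- p))) (close_refl V (- p)).
by rewrite subrr add0r !addr0.
Qed.

Lemma close_mono a b d d' : close V a b d -> le d d' -> close V a b d'.
Proof.
case=> h0 h1 h2 h; have h' : le 0 (d' - d) := le_sub0 h.
have e : d' = d + (d' - d) by rewrite addrC subrK.
split; first exact: vle_trans h0 h.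
- by rewrite e addrA; apply: le_adde.
- by rewrite e addrA; apply: le_adde.
Qed.

Lemma gen_bound a a' p d1 d2 : close V a' a d1 -> close V a' (- p) d2 ->
  close V a p d2 ->
  `|l a' - m a| <= (m d1 + l d1) / 2 + (m d2 - l d2) /\
  `|m a' - l a| <= (m d1 + l d1) / 2 + (m d2 - l d2).
Proof.
move=> /closeLM[a1 a2 a3 a4] /closeLM[b1 b2 b3 b4] /closeLM[c1 c2 c3 c4].
move: b1 b2 b3 b4; rewrite (lfN hl) (lfN lm) => b1 b2 b3 b4.
by rewrite !ler_norml; split; apply/andP; split; lra.
Qed.

Lemma approx_u x y u e : close V x 0 u -> close V y 0 u -> 0 < e ->
  exists x' y', [/\ `|l x' - m x| <= e, `|l y' - m y| <= e &
    `|l (T V x' y') - m (T V x y)| <= e] /\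
    [/\ `|m x' - l x| <= e, `|m y' - l y| <= e &
    `|m (T V x' y') - l (T V x y)| <= e].
Proof.
move=> hx hy he.
have hu : le 0 u by case: hx.
have he8 : 0 < e / 8 by rewrite divr_gt0.
case: (split_z hu he8) => z [hz hzu hd].
case: (clamp hz hzu hx) => cpx cxp.
case: (clamp hz hzu hy) => cpy cyp.
exists (x - jn (mt x z) (- z) - jn (mt x z) (- z)), (y - jn (mt y z) (- z) - jn (mt y z) (- z)).
have [X1 X2] := gen_bound (sh1 x cpx) (sh2 cxp) cxp.
have [Y1 Y2] := gen_bound (sh1 y cpy) (sh2 cyp) cyp.
have := close_T (sh2 cxp) (sh2 cyp); rewrite T_opp => H2.
have [T1 T2] := gen_bound (close_T (sh1 x cpx) (sh1 y cpy)) H2 (close_T cxp cyp).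
move: X1 X2 Y1 Y2 T1 T2.
rewrite !(lfB hl) !(lfD hl) !(lfB lm) !(lfD lm) ?(lfN hl) ?(lfN lm).
move=> X1 X2 Y1 Y2 T1 T2.
have eb : forall r s : R, r <= s -> s <= e -> r <= e by move=> r s h1 h2; exact: le_trans h1 h2.
by split; split; (apply: eb; [eassumption|lra]).
Qed.

Lemma approx x y e : 0 < e ->
  exists x' y', [/\ `|l x' - m x| <= e, `|l y' - m y| <= e &
    `|l (T V x' y') - m (T V x y)| <= e] /\
    [/\ `|m x' - l x| <= e, `|m y' - l y| <= e &
    `|m (T V x' y') - l (T V x y)| <= e].
Proof.
apply: approx_u.
- apply: close_mono (ab_close V x) _.
  by apply: le_adde; [apply: vle_refl|apply: ab_ge0].
- apply: close_mono (ab_close V y) _.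
  by rewrite addrC; apply: le_adde; [apply: vle_refl|apply: ab_ge0].
Qed.

Lemma close_scale a b d c : 0 <= c -> close V a b d ->
  close V (c *: a) (c *: b) (c *: d).
Proof.
move=> hc [h0 h1 h2]; split; first exact: le_scale0.
- by rewrite -scalerDr; apply: vle_scale.
- by rewrite -scalerDr; apply: vle_scale.
Qed.

Lemma closeZ w e c : close V (w - c *: e) w (`|c| *: ab V e).
Proof.
have ce : close V (c *: e) 0 (`|c| *: ab V e).
  have [hc|hc] := leP 0 c.
  - by rewrite ger0_norm //; have := close_scale hc (ab_close V e); rewrite scaler0.
  - rewrite ltr0_norm //.
    have -> : c *: e = (- c) *: (- e) by rewrite scalerN scaleNr opprK.
    have hc' : 0 <= - c by rewrite oppr_ge0 ltW.
    by have := close_scale hc' (close_opp (ab_close V e)); rewrite oppr0 scaler0.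
have := close_add (close_refl V w) (close_opp ce).
by rewrite oppr0 addr0 add0r.
Qed.

Lemma zero_lem (r A B : R) : 0 < A ->
  (forall e, 0 < e -> `|r| * A <= e * B) -> r = 0.
Proof.
move=> hA H; apply/eqP; rewrite -normr_le0; apply/ler_addgt0Pr => eta heta.
rewrite add0r.
have hB1 : 0 < `|B| + 1 by rewrite ltr_wpDl.
set eps := eta * A / (`|B| + 1).
have heps : 0 < eps by rewrite divr_gt0 // mulr_gt0.
have he : eps * (`|B| + 1) = eta * A by rewrite /eps divfK // gt_eqF.
have h1 := H eps heps.
have h2 : eps * B <= eps * `|B| by apply: ler_wpM2l; [exact: ltW|exact: ler_norm].
have h3 := normr_ge0 r.
nra.
Qed.

Lemma transfer (f g : X -> R) : linear_functional f -> linear_functional g ->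
  (forall a b d, close V a b d -> `|f a - f b| <= m d) ->
  (forall x y e, 0 < e -> exists x' y', [/\ `|f x' - g x| <= e,
     `|f y' - g y| <= e & `|f (T V x' y') - g (T V x y)| <= e]) ->
  (forall x y, f x = 0 -> f y = 0 -> f (T V x y) = 0) ->
  forall x y, g x = 0 -> g y = 0 -> g (T V x y) = 0.
Proof.
move=> lf lg hlip happ Gf x y gx gy.
case: (classic (exists e, f e != 0)) => [[e fe]|nf]; last first.
  have nf' w : f w = 0.
    by apply/eqP; apply/negPn/negP => h; apply: nf; exists w.
  apply/eqP; rewrite -normr_le0; apply/ler_addgt0Pr => eps heps; rewrite add0r.
  case: (happ x y eps heps) => x' [y' [_ _ h3]].
  by rewrite nf' sub0r normrN in h3.
set K := m (ab V e).
have hK : 0 <= K := m_ge0 (ab_ge0 V e).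
apply: (@zero_lem _ `|f e| (`|f e| + 4 * K)); first by rewrite normr_gt0.
move=> eps heps.
case: (happ x y eps heps) => x' [y' [h1 h2 h3]].
rewrite gx subr0 in h1; rewrite gy subr0 in h2.
set cx := f x' / f e; set cy := f y' / f e.
have fx0 : f (x' - cx *: e) = 0 by rewrite (lfB lf) (lfZ lf) /cx divfK // subrr.
have fy0 : f (y' - cy *: e) = 0 by rewrite (lfB lf) (lfZ lf) /cy divfK // subrr.
have := hlip _ _ _ (close_T (closeZ x' e cx) (closeZ y' e cy)).
rewrite (Gf _ _ fx0 fy0) sub0r normrN !(lfD lm) !(lfZ lm) -/K => hT.
have ecx : `|cx| * `|f e| = `|f x'| by rewrite -normrM /cx divfK.
have ecy : `|cy| * `|f e| = `|f y'| by rewrite -normrM /cy divfK.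
have hb' : `|g (T V x y)| <= eps + 2 * (`|cx| + `|cy|) * K.
  move: h3 hT; rewrite !ler_norml => /andP[h3 h4] /andP[h5 h6].
  apply/andP; split; lra.
have p1 := ler_wpM2r (normr_ge0 (f e)) hb'.
have p2 : (`|cx| * `|f e|) * K <= eps * K by rewrite ler_wpM2r // ecx.
have p3 : (`|cy| * `|f e|) * K <= eps * K by rewrite ler_wpM2r // ecy.
nra.
Qed.

Lemma main_fun : G_space V (kernel l) <-> G_space V (kernel m).
Proof.
have kl : (forall x y, kernel l x -> kernel l y -> forall a : R, kernel l (a *: x + y)) /\ kernel l 0.
  by split; [move=> x y hx hy a; rewrite /kernel hl hx hy mulr0 addr0|exact: lf0 hl].
have km : (forall x y, kernel m x -> kernel m y -> forall a : R, kernel m (a *: x + y)) /\ kernel m 0.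
  by split; [move=> x y hx hy a; rewrite /kernel lm hx hy mulr0 addr0|exact: lf0 lm].
split => [[_ [_ G]] | [_ [_ G]]].
- split; first exact: km.1. split; first exact: km.2.
  move=> x y hx hy.
  apply: (@transfer l m hl lm lip_l) => //.
  by move=> a b e he; case: (approx a b he) => a' [b' [[? ? ?] _]]; exists a', b'.
- split; first exact: kl.1. split; first exact: kl.2.
  move=> x y hx hy.
  apply: (@transfer m l lm hl lip_m) => //.
  by move=> a b e he; case: (approx a b he) => a' [b' [_ [? ? ?]]]; exists a', b'.
Qed.

End Fun.

Theorem lemma3 (R : realType) (X : lmodType R) (V : vectorLattice X)
  (l : X -> R) (hl : linear_functional l) (hb : order_bounded V l)
  (m : X -> R) (hm : is_modulus V l m) :
  G_space V (kernel l) <-> G_space V (kernel m).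
Proof. exact: (main_fun hl hb hm). Qed.
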